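(* Let $(S,+)$ be a commutative cancellative semigroup with no identity element such that its difference group $S-S$ carries a multiplication $\cdot$ making $(S-S,+,\cdot)$ an integral domain. Suppose $\kappa$ is an infinite regular cardinal, $|S|=\kappa$, and $((S-S)\setminus\{0\},\cdot)$ is a very weakly cancellative semigroup. Then every PP-rich set in $S$ has cardinality $\kappa$.
   Context: $S-S=\{a-b:a,b\in S\}$ is the difference group of $S$. $\mathbb{P}$ is the set of polynomial functions $S-S\to S-S$ in one variable with coefficients in $S-S$ and zero constant term; $\mathcal{P}_f(\mathbb{P})$ the set of its nonempty finite subsets. $A\subseteq S$ is PP-rich if for every $R\in\mathcal{P}_f(\mathbb{P})$ there exist $a,x\in S$ with $\{a+f(x): f\in R\}\subseteq A$. An infinite semigroup $(T,\cdot)$ of cardinality $\nu$ is very weakly cancellative if the union of fewer than $\nu$ sets of the form $\{x: a x=b\}$ has cardinality $<\nu$, and likewise for sets of the form $\{x: x a=b\}$. *)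

(* Defs.v *)
From HB Require Import structures.
From mathcomp Require Import all_boot all_order all_algebra.
From mathcomp Require Import boolp classical_sets cardinality.
Set Implicit Arguments. Unset Strict Implicit. Unset Printing Implicit Defensive.
Import GRing.Theory.
Local Open Scope classical_set_scope.
Local Open Scope ring_scope.

Definition card_lt T U (A : set T) (B : set U) : Prop :=
  (A #<= B)%card /\ ~ (B #<= A)%card.

Definition infinite_regular_card X (K : set X) : Prop :=
  infinite_set K /\
  forall (I : Type) (J : set I) (F : I -> set X),
    card_lt J K -> (forall i, J i -> card_lt (F i) K) ->
    card_lt (\bigcup_(i in J) F i) K.

Definition very_weakly_cancellative X (op : X -> X -> X) (T : set X) : Prop :=
  (forall x y, T x -> T y -> T (op x y)) /\
  (forall x y z, op x (op y z) = op (op x y) z) /\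
  infinite_set T /\
  (forall (I : Type) (J : set I) (a b : I -> X),
     card_lt J T -> (forall i, J i -> T (a i) /\ T (b i)) ->
     card_lt (\bigcup_(i in J) [set x | T x /\ op (a i) x = b i]) T) /\
  (forall (I : Type) (J : set I) (a b : I -> X),
     card_lt J T -> (forall i, J i -> T (a i) /\ T (b i)) ->
     card_lt (\bigcup_(i in J) [set x | T x /\ op x (a i) = b i]) T).

(* S is (a copy of) a commutative cancellative semigroup without identity,
   realized inside its difference group D = S - S. *)
Definition semigroup_with_difference_group (D : zmodType) (S : set D) : Prop :=
  (forall a b, S a -> S b -> S (a + b)) /\
  ~ S 0 /\
  (forall d : D, exists a b, S a /\ S b /\ d = a - b).

Definition zero_const_poly (D : idomainType) (p : {poly D}) : Prop := p`_0 = 0.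

Definition PP_rich (D : idomainType) (S A : set D) : Prop :=
  A `<=` S /\
  forall R : seq {poly D}, R != [::] -> (forall p, p \in R -> zero_const_poly p) ->
    exists a x, S a /\ S x /\ forall p, p \in R -> A (a + p.[x]).

(* Main.v *)
Require Import Defs.
From HB Require Import structures.
From mathcomp Require Import all_boot all_order all_algebra.
From mathcomp Require Import boolp classical_sets cardinality.
Local Open Scope classical_set_scope.
Local Open Scope ring_scope.
Import GRing.Theory.

Lemma clt_of_le (D : Type) (X Y S : set D) :
  (X #<= Y)%card -> card_lt Y S -> card_lt X S.
Proof.
move=> XY [YS nSY]; split; first exact: card_le_trans XY YS.
by move=> SX; apply: nSY; apply: card_le_trans SX XY.
Qed.

Theorem theorem5p6 (D : idomainType) (S : set D) :
  semigroup_with_difference_group S ->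
  infinite_regular_card S ->
  very_weakly_cancellative (@GRing.mul D) [set x : D | x != 0] ->
  forall A : set D, PP_rich S A -> (A #= S)%card.
Proof.
move=> [_ [S0 _]] [_ reg] _ A [AS rich].
apply/card_eqPle; split; first exact: subset_card_le.
apply: contrapT => nSA.
have hA : card_lt A S by split=> //; exact: subset_card_le.
pose B := \bigcup_(a in A) [set a - b | b in A].
have hB : card_lt B S.
  apply: reg => // a _; apply: clt_of_le hA.
  exact: (card_image_le (fun b => a - b)).
pose U := \bigcup_(w in B `\ 0) ((fun y => w * y) @^-1` B).
have hU : card_lt U S.
  apply: reg.
    exact: clt_of_le (card_le_setD _ _) hB.
  move=> w [_ /eqP w0]; apply: clt_of_le hB.
  apply: card_ge_preimage => y z _ _ /=; exact: mulfI.
apply: hU.2; apply: subset_card_le => y Sy.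
have zc : forall p, p \in [:: 0; 'X; y *: 'X] -> zero_const_poly p.
  by move=> p; rewrite !inE => /or3P[] /eqP ->;
     rewrite /zero_const_poly ?coef0 ?coefZ ?coefX ?mulr0.
have [a [x [Sa [Sx H]]]] := rich [:: 0; 'X; y *: 'X] isT zc.
have Aa : A a by have := H 0; rewrite hornerC addr0; apply; rewrite !inE eqxx.
have Aax : A (a + x) by have := H 'X; rewrite hornerX; apply; rewrite !inE eqxx orbT.
have Aayx : A (a + y * x).
  by have := H (y *: 'X); rewrite hornerZ hornerX; apply; rewrite !inE eqxx !orbT.
exists x.
  split; first by exists (a + x) => //; exists a => //; rewrite addrC addKr.
  by move=> /= x0; apply: S0; rewrite -x0.
by exists (a + y * x) => //; exists a => //; rewrite addrC addKr mulrC.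
Qed.
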